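(* Let $G$ be a finite group, $K\unlhd H\le G$ with $H/K$ cyclic, and $\psi$ a linear character of $H$ with kernel $K$. Suppose there are a normal subgroup $A$ of $G$ and a subgroup $L$ of $G$ with $A\le H\le L$, such that $\psi_A$ is invariant in $L$ and $L\unlhd N_G(\ker\psi_A)$. Then: (i) if $\psi^L$ is irreducible, the distinct $G$-conjugates of $e_{\mathbb{Q}}(\psi^L)$ are mutually orthogonal; (ii) if $\psi^G$ is irreducible, then $e_{\mathbb{Q}}(\psi^G)$ is the sum of all distinct $G$-conjugates of $e_{\mathbb{Q}}(\psi^L)$, and $$\alpha_{(G,H,K)}=\alpha_{(L,H,K)}\frac{[\operatorname{Cen}_G(\varepsilon(H,K)):\operatorname{Cen}_L(\varepsilon(H,K))]}{[\operatorname{Cen}_G(e(L,H,K)):L]}.$$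
   Context: For $\chi\in\operatorname{Irr}M$, $e_{\mathbb{Q}}(\chi)=\frac{\chi(1)}{|M|}\sum_{\sigma\in\operatorname{Gal}(\mathbb{Q}(\chi)/\mathbb{Q})}\sum_{g\in M}\sigma(\chi(g))g^{-1}$, a primitive central idempotent of $\mathbb{Q}M$. $\psi_A$ is the restriction, $\psi^L,\psi^G$ induced characters; a character $\lambda$ of $A$ is invariant in $L$ if $\lambda(xax^{-1})=\lambda(a)$ for all $x\in L,a\in A$. $\operatorname{Cen}_G(a)$ is the centralizer of $a\in\mathbb{Q}G$ in $G$. For $K\unlhd H\le M$: $\widehat H=\frac1{|H|}\sum_{h\in H}h$; $\varepsilon(H,K)=\widehat K$ if $H=K$, else $\prod(\widehat K-\widehat L')$ over $L'\unlhd H$ with $L'/K$ minimal normal in $H/K$; $e(M,H,K)$ is the sum of the distinct $M$-conjugates of $\varepsilon(H,K)$. A Shoda pair of $M$ is $(H,K)$ with $K\unlhd H\le M$, $H/K$ cyclic, and $g\in M$, $[H,g]\cap H\subseteq K$ imply $g\in H$ (equivalently, $\psi^M$ is irreducible for a linear $\psi$ on $H$ with kernel $K$); then $\alpha_{(M,H,K)}$ denotes the unique rational number with $\alpha_{(M,H,K)}e(M,H,K)$ a primitive central idempotent of $\mathbb{Q}M$ (namely $e_{\mathbb{Q}}(\psi^M)$). *)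

(* Defs.v *)
From HB Require Import structures.
From mathcomp Require Import all_boot all_order all_algebra all_fingroup.
From mathcomp Require Import all_solvable all_field all_character.
From Stdlib Require Import ClassicalEpsilon.
Set Implicit Arguments. Unset Strict Implicit. Unset Printing Implicit Defensive.
Import Order.TTheory GRing.Theory Num.Theory.
Local Open Scope ring_scope.

Definition decP (P : Prop) : bool :=
  if excluded_middle_informative P then true else false.

(* Elements of the group algebra C[gT] (containing Q[M] for every M <= gT):
   a = \sum_g a(g) g, represented by its coefficient function. *)
Notation galg gT := {ffun gT -> algC}.

Section GroupAlgebra.
Variable gT : finGroupType.

Definition ga_of (g : gT) : galg gT := [ffun h => (h == g)%:R].

Definition ga_mul (a b : galg gT) : galg gT :=
  [ffun g => \sum_(h : gT) a h * b (h^-1 * g)%g].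

Definition ga_scale (c : algC) (a : galg gT) : galg gT := [ffun g => c * a g].

Definition ga_one : galg gT := ga_of 1%g.

(* Conjugation x a x^-1 (coefficient of g is a(x^-1 g x) = a(g ^ x)). *)
Definition ga_conj (x : gT) (a : galg gT) : galg gT := [ffun g => a (g ^ x)%g].

Definition ga_hat (H : {set gT}) : galg gT :=
  [ffun g => if g \in H then (#|H|%:R)^-1 else 0].

Definition ga_cen (M : {set gT}) (a : galg gT) : {set gT} :=
  [set g in M | ga_conj g a == a].

(* L'/K is a minimal normal subgroup of H/K (L' normal in H). *)
Definition minnormal_over (H K L' : {set gT}) : bool :=
  [&& group_set L', (L' <| H)%g, K \proper L' &
   [forall N : {set gT},
      [&& group_set N, (N <| H)%g, K \subset N & N \subset L'] ==>
      (N == K) || (N == L')]].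

Definition eps (H K : {set gT}) : galg gT :=
  if H == K then ga_hat K
  else \big[ga_mul/ga_one]_(L' : {set gT} | minnormal_over H K L')
          (ga_hat K - ga_hat L').

Definition conj_sum (M : {set gT}) (a : galg gT) : galg gT :=
  \sum_(b <- undup [seq ga_conj x a | x <- enum M]) b.

Definition eMHK (M H K : {set gT}) : galg gT := conj_sum M (eps H K).

(* The distinct Galois conjugates chi^sigma, sigma in Gal(Q(chi)/Q), of an
   irreducible character chi of M: these are exactly the irreducible
   characters of the form cfAut u chi, u an automorphism of algC. *)
Definition gal_conjs (M : {group gT}) (chi : 'CF(M)) : seq 'CF(M) :=
  [seq phi <- irr M | decP (exists u : {rmorphism algC -> algC},
                                phi = cfAut u chi)].

Definition eQ (M : {group gT}) (chi : 'CF(M)) : galg gT :=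
  [ffun g => if g \in M then
     chi 1%g / #|M|%:R * \sum_(phi <- gal_conjs chi) phi (g^-1)%g
   else 0].

End GroupAlgebra.

(* Main.v *)
Require Import Defs.
From HB Require Import structures.
From mathcomp Require Import all_boot all_order all_algebra all_fingroup.
From mathcomp Require Import all_solvable all_field all_character.
From mathcomp Require Import ring.
Set Implicit Arguments. Unset Strict Implicit. Unset Printing Implicit Defensive.
Import Order.TTheory GRing.Theory Num.Theory.
Local Open Scope ring_scope.

Section GA.
Variable gT : finGroupType.
Implicit Types (a b : galg gT) (x y g h : gT).

Lemma ga_mulE a b g : ga_mul a b g = \sum_h a h * b (h^-1 * g)%g.
Proof. by rewrite ffunE. Qed.

Lemma ga_conjE x a g : ga_conj x a g = a (g ^ x)%g.
Proof. by rewrite ffunE. Qed.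

Lemma gaZE c a g : ga_scale c a g = c * a g.
Proof. by rewrite ffunE. Qed.

Lemma ga_conjM x y a : ga_conj x (ga_conj y a) = ga_conj (x * y)%g a.
Proof. by apply/ffunP => g; rewrite !ffunE conjgM. Qed.

Lemma ga_conj1 a : ga_conj 1%g a = a.
Proof. by apply/ffunP => g; rewrite !ffunE conjg1. Qed.

Lemma ga_conjK x : cancel (ga_conj x) (ga_conj x^-1).
Proof. by move=> a; rewrite ga_conjM mulVg ga_conj1. Qed.

Lemma ga_conjKV x : cancel (ga_conj x^-1) (ga_conj x).
Proof. by move=> a; rewrite ga_conjM mulgV ga_conj1. Qed.

Lemma ga_conj_inj x : injective (ga_conj x).
Proof. exact: can_inj (ga_conjK x). Qed.

Lemma ga_conj_sum x I (r : seq I) (P : pred I) (F : I -> galg gT) :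
  ga_conj x (\sum_(i <- r | P i) F i) = \sum_(i <- r | P i) ga_conj x (F i).
Proof.
apply/ffunP => g; rewrite ffunE !sum_ffunE; apply: eq_bigr => i _.
by rewrite ffunE.
Qed.

Lemma ga_conjZ x c a : ga_conj x (ga_scale c a) = ga_scale c (ga_conj x a).
Proof. by apply/ffunP => g; rewrite !ffunE. Qed.

Lemma ga_conj_mul x a b :
  ga_conj x (ga_mul a b) = ga_mul (ga_conj x a) (ga_conj x b).
Proof.
apply/ffunP => g; rewrite !ffunE (reindex_inj (@conjg_inj _ x)) /=.
by apply: eq_bigr => h _; rewrite !ffunE conjMg conjVg.
Qed.

Lemma ga_mul_suml I (r : seq I) (P : pred I) (F : I -> galg gT) b :
  ga_mul (\sum_(i <- r | P i) F i) b = \sum_(i <- r | P i) ga_mul (F i) b.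
Proof.
apply/ffunP => g; rewrite ffunE sum_ffunE.
under eq_bigr do rewrite sum_ffunE big_distrl.
rewrite exchange_big; apply: eq_bigr => i _; rewrite ffunE //.
Qed.

Lemma ga_mul_sumr I (r : seq I) (P : pred I) (F : I -> galg gT) a :
  ga_mul a (\sum_(i <- r | P i) F i) = \sum_(i <- r | P i) ga_mul a (F i).
Proof.
apply/ffunP => g; rewrite ffunE sum_ffunE.
under eq_bigr do rewrite sum_ffunE big_distrr.
rewrite exchange_big; apply: eq_bigr => i _; rewrite ffunE //.
Qed.

Lemma ga_mulZl c a b : ga_mul (ga_scale c a) b = ga_scale c (ga_mul a b).
Proof.
apply/ffunP => g; rewrite !ffunE big_distrr; apply: eq_bigr => h _.
by rewrite !ffunE -mulrA.
Qed.

Lemma ga_mulZr c a b : ga_mul a (ga_scale c b) = ga_scale c (ga_mul a b).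
Proof.
apply/ffunP => g; rewrite !ffunE big_distrr; apply: eq_bigr => h _.
by rewrite !ffunE mulrCA.
Qed.

Lemma ga_mul0l b : ga_mul 0 b = 0.
Proof. by apply/ffunP => g; rewrite !ffunE big1 // => h _; rewrite ffunE mul0r. Qed.

Lemma ga_mul0r a : ga_mul a 0 = 0.
Proof. by apply/ffunP => g; rewrite !ffunE big1 // => h _; rewrite ffunE mulr0. Qed.


Definition ce (M : {group gT}) (phi : 'CF(M)) : galg gT :=
  [ffun g => phi 1%g / #|M|%:R * phi (g^-1)%g].

Lemma ce_out (M : {group gT}) (phi : 'CF(M)) g : g \notin M -> ce phi g = 0.
Proof. by move=> nMg; rewrite ffunE [phi (g^-1)%g]cfun0 ?mulr0 ?groupV. Qed.

Lemma sum_in_M (M : {group gT}) (F : gT -> algC) :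
  (forall h, h \notin M -> F h = 0) -> \sum_h F h = \sum_(h in M) F h.
Proof.
move=> F0; rewrite [RHS]big_mkcond; apply: eq_bigr => h _.
by case: ifP => // /negbT /F0.
Qed.

Lemma ce_mul (M : {group gT}) (i j : Iirr M) :
  ga_mul (ce 'chi_i) (ce 'chi_j) = if i == j then ce 'chi_i else 0.
Proof.
apply/ffunP => g; rewrite ffunE.
rewrite (sum_in_M (M := M)); last by move=> h nMh; rewrite ce_out ?mul0r.
have := generalized_orthogonality_relation (g^-1)%g j i.
set S := \sum_(x in M) _ => HS.
have -> : \sum_(h in M) ce 'chi_i h * ce 'chi_j (h^-1 * g)%g =
   'chi_i 1%g / #|M|%:R * ('chi_j 1%g / #|M|%:R) * S.
  rewrite /S big_distrr; apply: eq_bigr => h Mh /=; rewrite !ffunE.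
  have -> : ((h^-1 * g)^-1)%g = ((h * g^-1) ^ h)%g.
    by rewrite invMg invgK /conjg !mulgA mulVg mul1g.
  rewrite cfunJ //. 
  ring.
have nzM : #|M|%:R != 0 :> algC by rewrite neq0CG.
have -> : S = #|M|%:R * ((j == i)%:R * ('chi_j (g^-1)%g / 'chi_j 1%g)).
  by rewrite -HS mulrA mulfV // mul1r.
have [<- | neq] := eqVneq i j; last first.
  by rewrite ffunE /=; ring.
rewrite ffunE /=.
have nz1 := irr1_neq0 i.
by field; rewrite nzM nz1.
Qed.

Lemma ga_conj_ce (M : {group gT}) (phi : 'CF(M)) z :
  z \in ('N(M))%g -> ga_conj z (ce phi) = ce (phi ^ z^-1)%CF.
Proof.
move=> nMz; apply/ffunP => g; rewrite !ffunE cfConjg1 cfConjgE ?groupV //.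
by rewrite invgK conjVg.
Qed.

Lemma decPT (P : Prop) : Defs.decP P <-> P.
Proof. by rewrite /Defs.decP; case: ClassicalEpsilon.excluded_middle_informative. Qed.

Lemma irr_uniq (M : {group gT}) : uniq (irr M).
Proof.
rewrite -(map_tnth_enum (irr M)) map_inj_uniq ?enum_uniq //; exact: irr_inj.
Qed.

Lemma gal_uniq (M : {group gT}) (chi : 'CF(M)) : uniq (gal_conjs chi).
Proof. exact/filter_uniq/irr_uniq. Qed.

Lemma mem_gal (M : {group gT}) (chi phi : 'CF(M)) :
  chi \in irr M ->
  (phi \in gal_conjs chi) <-> exists u : {rmorphism algC -> algC}, phi = cfAut u chi.
Proof.
move=> irrc; rewrite mem_filter; split.
  by case/andP => /decPT.
case=> u ->; rewrite cfAut_irr irrc andbT; apply/decPT; by exists u.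
Qed.

Lemma gal_self (M : {group gT}) (chi : 'CF(M)) :
  chi \in irr M -> chi \in gal_conjs chi.
Proof.
move=> irrc; apply/mem_gal => //; exists idfun.
by apply/cfunP => x; rewrite cfunE.
Qed.

Lemma gal_irr (M : {group gT}) (chi phi : 'CF(M)) :
  phi \in gal_conjs chi -> phi \in irr M.
Proof. by rewrite mem_filter => /andP[]. Qed.

Lemma gal_trans (M : {group gT}) (chi phi : 'CF(M)) :
  chi \in irr M -> phi \in gal_conjs chi -> gal_conjs phi =i gal_conjs chi.
Proof.
move=> irrc galp; have irrp := gal_irr galp.
have [u defp] := (mem_gal phi irrc).1 galp.
move=> psi; apply/idP/idP.
  move/(mem_gal _ irrp) => [v ->]; apply/mem_gal => //; exists (v \o u)%FUN.
  by rewrite defp; apply/cfunP => x; rewrite !cfunE.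
move/(mem_gal _ irrc) => [v ->]; apply/mem_gal => //.
exists (v \o algC_invaut u)%FUN.
by rewrite defp; apply/cfunP => x; rewrite !cfunE /= algC_autK.
Qed.

Lemma gal1 (M : {group gT}) (chi phi : 'CF(M)) :
  chi \in irr M -> phi \in gal_conjs chi -> phi 1%g = chi 1%g.
Proof.
move=> irrc /(mem_gal _ irrc) [u ->]; have [i ->] := irrP irrc.
exact: cfAut_irr1.
Qed.

Lemma eQ_ce (M : {group gT}) (chi : 'CF(M)) :
  chi \in irr M -> eQ chi = \sum_(phi <- gal_conjs chi) ce phi.
Proof.
move=> irrc; apply/ffunP => g; rewrite ffunE sum_ffunE.
case: ifP => Mg; last first.
  by rewrite big1_seq // => phi _; rewrite ce_out // Mg.
rewrite big_distrr /=; apply: eq_big_seq => phi galp.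
by rewrite ffunE (gal1 irrc galp).
Qed.

Lemma ce_mul_irr (M : {group gT}) (phi psi : 'CF(M)) :
  phi \in irr M -> psi \in irr M ->
  ga_mul (ce phi) (ce psi) = if phi == psi then ce phi else 0.
Proof.
move=> /irrP[i ->] /irrP[j ->]; rewrite ce_mul.
by rewrite (inj_eq irr_inj).
Qed.

Lemma sum_if_uniq (T : eqType) (s : seq T) (t : T) (X : galg gT) :
  uniq s -> t \in s -> \sum_(w <- s) (if t == w then X else 0) = X.
Proof.
move=> us ts; rewrite -big_mkcond big_const_seq.
have -> : count (fun w => t == w) s = 1%N.
  rewrite (eq_count (a2 := pred1 t)); first by rewrite (count_uniq_mem _ us) ts.
  by move=> w; rewrite /= eq_sym.
by rewrite /= addr0.
Qed.

Lemma sum_if_notin (T : eqType) (s : seq T) (t : T) (X : galg gT) :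
  t \notin s -> \sum_(w <- s) (if t == w then X else 0) = 0.
Proof.
move=> ts; rewrite big1_seq // => w /andP[_ ws]; case: eqP => // ew.
by rewrite ew ws in ts.
Qed.

Lemma ce_eQ (M : {group gT}) (chi phi : 'CF(M)) :
  chi \in irr M -> phi \in irr M ->
  ga_mul (ce phi) (eQ chi) = if phi \in gal_conjs chi then ce phi else 0.
Proof.
move=> irrc irrp; rewrite eQ_ce // ga_mul_sumr.
rewrite (eq_big_seq (fun psi => if phi == psi then ce phi else 0)); last first.
  by move=> psi /gal_irr irrs; rewrite ce_mul_irr.
case: ifP => galp; first by rewrite sum_if_uniq ?gal_uniq.
by rewrite sum_if_notin ?galp.
Qed.

Lemma eQ_idem (M : {group gT}) (chi : 'CF(M)) :
  chi \in irr M -> ga_mul (eQ chi) (eQ chi) = eQ chi.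
Proof.
move=> irrc; rewrite {1}eQ_ce // ga_mul_suml [RHS]eQ_ce //.
apply: eq_big_seq => phi galp; rewrite ce_eQ ?galp //; exact: gal_irr galp.
Qed.
End GA.

Lemma gal_aut (gT : finGroupType) (M : {group gT}) (chi phi : 'CF(M)) u :
  chi \in irr M -> phi \in gal_conjs chi -> cfAut u phi \in gal_conjs chi.
Proof.
move=> irrc galp; rewrite -(gal_trans irrc galp); apply/mem_gal.
  exact: gal_irr galp.
by exists u.
Qed.


Section GA2.
Variable gT : finGroupType.
Implicit Types (a b : galg gT) (x y g h : gT).

Lemma ga_cen1 (M : {group gT}) a : 1%g \in ga_cen M a.
Proof. by rewrite inE group1 ga_conj1 eqxx. Qed.

Lemma ga_cen_neq0 (M : {group gT}) a : #|ga_cen M a|%:R != 0 :> algC.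
Proof. by rewrite pnatr_eq0 -lt0n card_gt0; apply/set0Pn; exists 1%g; apply: ga_cen1. Qed.

Lemma fiber_card (M : {group gT}) a x0 : x0 \in M ->
  #|M :&: [set x | ga_conj x a == ga_conj x0 a]| = #|ga_cen M a|.
Proof.
move=> Mx0; rewrite -(card_imset _ (mulgI x0)).
apply: eq_card => x; apply/idP/imsetP.
  move=> /setIP [Mx]; rewrite inE => /eqP fx; exists (x0^-1 * x)%g.
    by rewrite inE groupM ?groupV // -ga_conjM fx ga_conjK eqxx.
  by rewrite mulKVg.
move=> [c]; rewrite inE => /andP [Mc /eqP fc] ->.
by rewrite inE groupM // inE -ga_conjM fc eqxx.
Qed.

Lemma ga_scale_nat n a : a *+ n = ga_scale n%:R a.
Proof. by apply/ffunP => g; rewrite ffunMnE ffunE mulr_natl. Qed.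

Lemma ga_scale_sum c I (r : seq I) (P : pred I) (F : I -> galg gT) :
  ga_scale c (\sum_(i <- r | P i) F i) = \sum_(i <- r | P i) ga_scale c (F i).
Proof.
apply/ffunP => g; rewrite ffunE !sum_ffunE big_distrr; apply: eq_bigr => i _.
by rewrite ffunE.
Qed.

Lemma fiber_sum (M : {group gT}) a :
  \sum_(x in M) ga_conj x a = ga_scale #|ga_cen M a|%:R (conj_sum M a).
Proof.
rewrite /conj_sum ga_scale_sum -big_enum /=.
rewrite -(big_map (fun x => ga_conj x a) predT id).
rewrite -big_undup_iterop_count; apply: eq_big_seq => b.
rewrite mem_undup => /mapP [x0]; rewrite mem_enum => Mx0 ->.
rewrite Monoid.iteropE iter_addr_0 ga_scale_nat; congr (ga_scale _%:R _).
rewrite count_map -(fiber_card a Mx0) cardE (perm_size (enum_setI _ _)).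
by rewrite size_filter; apply: eq_count => x /=; rewrite !inE.
Qed.

Lemma ga_scaleK c : c != 0 -> cancel (@ga_scale gT c) (@ga_scale gT c^-1).
Proof. by move=> nz a; apply/ffunP => g; rewrite !ffunE mulKf. Qed.

Lemma ga_scale_inj c : c != 0 -> injective (@ga_scale gT c).
Proof. by move=> nz; apply: can_inj (ga_scaleK nz). Qed.

Lemma ga_cen_scale (M : {group gT}) c a : c != 0 ->
  ga_cen M (ga_scale c a) = ga_cen M a.
Proof.
move=> nz; apply/setP => x; rewrite !inE ga_conjZ.
by rewrite (inj_eq (ga_scale_inj nz)).
Qed.

Lemma conj_sum1 (M : {group gT}) a :
  conj_sum M a 1%g = #|M|%:R / #|ga_cen M a|%:R * a 1%g.
Proof.
have := congr1 (fun f : galg gT => f 1%g) (fiber_sum M a).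
rewrite sum_ffunE ffunE /=.
under eq_bigr do rewrite ffunE conj1g.
rewrite sumr_const -[a 1%g *+ _]mulr_natl => E.
have nz := ga_cen_neq0 M a.
apply: (mulfI nz); rewrite -E; field.
by rewrite nz.
Qed.

Lemma ga_mulA a b c : ga_mul (ga_mul a b) c = ga_mul a (ga_mul b c).
Proof.
apply/ffunP => g; rewrite !ffunE.
under eq_bigr do rewrite ffunE big_distrl.
rewrite exchange_big; apply: eq_bigr => k _ /=.
rewrite ffunE big_distrr (reindex_inj (mulgI k)) /=.
apply: eq_bigr => h _; rewrite -mulrA; congr (_ * (_ * _)).
  by rewrite mulKg.
by rewrite invMg -mulgA.
Qed.

Lemma ga_mul_comm (M : {group gT}) a b :
  (forall x g, x \in M -> a (g ^ x)%g = a g) ->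
  (forall g, g \notin M -> b g = 0) -> ga_mul a b = ga_mul b a.
Proof.
move=> ca sb; apply/ffunP => g; rewrite !ffunE.
rewrite (reindex_inj (inj_comp (mulgI g) (@invg_inj _))) /=.
apply: eq_bigr => h _; rewrite invMg invgK -mulgA mulVg mulg1 mulrC.
have [Mh | nMh] := boolP (h \in M); last by rewrite sb // !mul0r.
congr (_ * _); rewrite -(ca h) //.
by rewrite conjgE mulgKV.
Qed.

Lemma ce_class (M : {group gT}) (phi : 'CF(M)) x g :
  x \in M -> ce phi (g ^ x)%g = ce phi g.
Proof. by move=> Mx; rewrite !ffunE -conjVg cfunJ. Qed.

Lemma eQ_class (M : {group gT}) (chi : 'CF(M)) x g :
  chi \in irr M -> x \in M -> eQ chi (g ^ x)%g = eQ chi g.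
Proof.
move=> irrc Mx; rewrite eQ_ce // !sum_ffunE; apply: eq_bigr => phi _.
exact: ce_class.
Qed.

Lemma ce_neq0 (M : {group gT}) (phi : 'CF(M)) : phi \in irr M -> ce phi != 0.
Proof.
move=> /irrP [i ->]; apply/negP => /eqP /(congr1 (fun f : galg gT => f 1%g)).
rewrite !ffunE invg1 => /eqP. rewrite !mulf_eq0 invr_eq0 (negPf (irr1_neq0 i)) /=.
by rewrite orbF pnatr_eq0 => /eqP M0; have := cardG_gt0 M; rewrite M0.
Qed.

Lemma eQ1 (M : {group gT}) (chi : 'CF(M)) : chi \in irr M ->
  eQ chi 1%g = chi 1%g / #|M|%:R * ((size (gal_conjs chi))%:R * chi 1%g).
Proof.
move=> irrc; rewrite ffunE group1 invg1; congr (_ * _).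
rewrite big_seq (eq_bigr (fun _ => chi 1%g)) -?big_seq.
  by rewrite big_const_seq iter_addr_0 count_predT -[_ *+ _]mulr_natl.
by move=> phi galp; rewrite (gal1 irrc galp).
Qed.

Lemma eQ1_neq0 (M : {group gT}) (chi : 'CF(M)) : chi \in irr M -> eQ chi 1%g != 0.
Proof.
move=> irrc; rewrite eQ1 //; have [i defc] := irrP irrc.
have nz1 : chi 1%g != 0 by rewrite defc irr1_neq0.
rewrite !mulf_neq0 ?invr_eq0 ?pnatr_eq0 -?lt0n ?cardG_gt0 //.
by move: (gal_self irrc); case: (gal_conjs chi).
Qed.

End GA2.

Section GA3.
Variable gT : finGroupType.
Implicit Types (a b : galg gT) (x y g h : gT).

Lemma ga_scaleA c d a : ga_scale c (ga_scale d a) = ga_scale (c * d) a.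
Proof. by apply/ffunP => g; rewrite !ffunE mulrA. Qed.

Lemma mem_conj_list (M : {group gT}) a b :
  b \in undup [seq ga_conj x a | x <- enum M] -> exists2 x, x \in M & b = ga_conj x a.
Proof. by rewrite mem_undup => /mapP [x]; rewrite mem_enum => Mx ->; exists x. Qed.

Lemma ind_avg (L G : {group gT}) (phi : 'CF(L)) : L \subset G ->
  \sum_(y in G) ga_conj y (ce phi) = ga_scale #|L|%:R (ce ('Ind[G] phi)).
Proof.
move=> sLG; apply/ffunP => g; rewrite sum_ffunE !ffunE cfInd1 // cfIndE //.
under eq_bigr do rewrite !ffunE -conjVg.
rewrite -big_distrr /=.
set X := \sum_(y in G) _.
have nzL : #|L|%:R != 0 :> algC by rewrite neq0CG.
have nzGL : (#|G : L|%g)%:R != 0 :> algC by rewrite pnatr_eq0 -lt0n indexg_gt0.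
rewrite -(Lagrange sLG) natrM.
by field; rewrite nzL nzGL.
Qed.

Lemma irr_sum_char (G : {group gT}) (a b : 'CF(G)) :
  a \is a character -> b \is a character -> a + b \in irr G -> a = 0 \/ b = 0.
Proof.
move=> Ca Cb /irrP [k dk].
have key : forall c d : 'CF(G), c \is a character -> d \is a character ->
    c + d = 'chi_k -> c != 0 -> exists n, '[c, 'chi_k] = n.+1%:R.
  move=> c d Cc Cd dcd nzc; have [j] := neq0_has_constt nzc.
  rewrite irr_consttE => cj.
  have [n en] := natrP (Cnat_cfdot_char_irr j Cc).
  have [m em] := natrP (Cnat_cfdot_char_irr j Cd).
  have nzn : n != 0%N by apply: contraNneq cj => n0; rewrite en n0.
  have E := cfdot_irr k j; rewrite -dcd cfdotDl en em -natrD in E.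
  move/eqP: E; rewrite eqr_nat; case: (eqVneq k j) => [ekj | nkj] H.
    by exists n.-1; rewrite ekj en prednK // lt0n.
  by move: H; rewrite /= eqn0Ngt addn_gt0 lt0n nzn.
have [-> | nza] := eqVneq a 0; first by left.
have [-> | nzb] := eqVneq b 0; first by right.
have [n en] := key a b Ca Cb dk nza.
have dk' : b + a = 'chi_k by rewrite addrC.
have [m em] := key b a Cb Ca dk' nzb.
have E := cfdot_irr k k; rewrite -{1}dk cfdotDl en em eqxx -natrD in E.
move/eqP: E.
by rewrite eqr_nat addSn addnS.
Qed.

Lemma Ind_irr_sub (L G : {group gT}) (theta : 'CF(L)) : L \subset G ->
  theta \is a character -> 'Ind[G] theta \in irr G -> theta \in irr L.
Proof.
move=> sLG Ct irrI.
have nzt : theta != 0.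
  apply: contraTneq irrI => ->; rewrite raddf0.
  by apply/negP => /irrP [i /esym/eqP]; rewrite (negPf (irr_neq0 i)).
have [i ci] := neq0_has_constt nzt.
have [rho Crho dt] := constt_charP i Ct ci.
move: irrI; rewrite dt raddfD => irrI.
have [I0 | R0] := irr_sum_char (cfInd_char G (irr_char i)) (cfInd_char G Crho) irrI.
  by have := Ind_irr_neq0 i sLG; rewrite I0 eqxx.
have : 'Ind[G] rho 1%g == 0 by rewrite R0 cfunE.
rewrite cfInd1 // mulf_eq0 pnatr_eq0 eqn0Ngt indexg_gt0 /= char1_eq0 // => /eqP ->.
by rewrite addr0 mem_irr.
Qed.

End GA3.
Section Main.
Variables (gT : finGroupType) (G H K A L : {group gT}) (psi : 'CF(H)).
Hypotheses (sHG : H \subset G) (lin_psi : psi \is a linear_char)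
  (nAG : (A <| G)%g) (sAH : A \subset H) (sHL : H \subset L) (sLG : L \subset G)
  (inv_psiA : forall x a, x \in L -> a \in A ->
                'Res[A] psi (a ^ x)%g = 'Res[A] psi a)
  (nLN : (L <| 'N_G(cfker ('Res[A] psi)))%g).

Local Notation theta := ('Ind[L] psi).
Local Notation kerl := (cfker ('Res[A] psi)).

Lemma nAx x : x \in G -> x \in ('N(A))%g.
Proof. exact: subsetP (normal_norm nAG) x. Qed.

Lemma psi_inv x a : x \in L -> a \in A -> psi (a ^ x)%g = psi a.
Proof.
move=> Lx Aa; have Aax : (a ^ x)%g \in A by rewrite memJ_norm // nAx // (subsetP sLG).
by rewrite -(cfResE psi sAH Aa) -(cfResE psi sAH Aax) inv_psiA.
Qed.

Lemma theta_shiftl a y : a \in A -> theta (a * y)%g = psi a * theta y.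
Proof.
move=> Aa; rewrite !cfIndE // [RHS]mulrCA; congr (_ * _); rewrite big_distrr /=.
apply: eq_bigr => x Lx; rewrite conjMg.
have Ha : (a ^ x)%g \in H.
  by rewrite (subsetP sAH) // memJ_norm // nAx // (subsetP sLG).
case Hy: ((y ^ x)%g \in H).
  by rewrite lin_charM // psi_inv.
by rewrite [psi (y ^ x)%g]cfun0 ?Hy // [psi (_ * _)%g]cfun0 ?mulr0 // groupMl // Hy.
Qed.

Lemma theta_shiftr a y : a \in A -> theta (y * a)%g = psi a * theta y.
Proof.
move=> Aa; have -> : (y * a = (a * y) ^ a)%g by rewrite conjgE -mulgA mulKg.
rewrite cfunJ ?theta_shiftl //.
by rewrite (subsetP sHL) // (subsetP sAH).
Qed.

Lemma gal_shift phi : theta \in irr L -> phi \in gal_conjs theta ->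
  exists u : {rmorphism algC -> algC}, forall a y, a \in A ->
    phi (a * y)%g = u (psi a) * phi y /\ phi (y * a)%g = u (psi a) * phi y.
Proof.
move=> irrt /(mem_gal _ irrt) [u ->]; exists u => a y Aa.
by rewrite !cfunE theta_shiftl // theta_shiftr // rmorphM.
Qed.

Lemma psiA_ker a : a \in A -> (a \in kerl) = (psi a == 1).
Proof.
move=> Aa; rewrite cfkerEchar ?cfRes_char ?lin_charW // inE Aa.
by rewrite !cfResE // lin_char1.
Qed.

Lemma ce_orth_out phi phi' z : theta \in irr L ->
  phi \in gal_conjs theta -> phi' \in gal_conjs theta ->
  z \in G -> z \notin ('N(kerl))%g ->
  ga_mul (ce phi) (ga_conj z (ce phi')) = 0.
Proof.
move=> irrt galp galp' Gz nz.
have [a ka nka] : exists2 a, a \in kerl & (a ^ z)%g \notin kerl.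
  have : ~~ (kerl :^ z \subset kerl)%g.
    apply/negP => sub; move/negP: nz; apply; apply/normP; apply/eqP.
    by rewrite eqEcard sub cardJg leqnn.
  move=> /subsetPn [c cJ nc]; exists (c ^ z^-1)%g.
    by rewrite -mem_conjg.
  by rewrite conjgKV.
have Aa : a \in A by apply: (subsetP (cfker_sub ('Res[A] psi))).
have Aaz : (a ^ z)%g \in A by rewrite memJ_norm // nAx.
have psia1 : psi a^-1%g = 1 by apply/eqP; rewrite -psiA_ker ?groupV.
have [u Hu] := gal_shift irrt galp.
have [u' Hu'] := gal_shift irrt galp'.
apply/ffunP => g; rewrite ffunE [RHS]ffunE.
set S := \sum_h _.
have eS : S = u' (psi (a ^ z)%g) * S.
  rewrite {1}/S (reindex_inj (mulIg a)) /= /S big_distrr; apply: eq_bigr => h _ /=.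
  rewrite !ffunE invMg (Hu a^-1%g h^-1%g (groupVr Aa)).1 psia1 rmorph1 mul1r.
  have -> : ((((a^-1 * h^-1) * g) ^ z)^-1 = ((h^-1 * g) ^ z)^-1 * (a ^ z))%g.
    by rewrite -mulgA conjMg invMg conjVg invgK.
  rewrite (Hu' (a ^ z)%g _ Aaz).2.
  ring.
have : (1 - u' (psi (a ^ z)%g)) * S = 0 by rewrite mulrBl mul1r -eS subrr.
move/eqP; rewrite mulf_eq0 subr_eq0 eq_sym fmorph_eq1 -psiA_ker // (negPf nka) /=.
by move/eqP.
Qed.

Lemma part1 : theta \in irr L ->
  forall x y, x \in G -> y \in G ->
    ga_conj x (eQ theta) != ga_conj y (eQ theta) ->
    ga_mul (ga_conj x (eQ theta)) (ga_conj y (eQ theta)) = 0.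
Proof.
move=> irrt x y Gx Gy neq.
set e := eQ theta in neq *; set z := (x^-1 * y)%g.
have Gz : z \in G by rewrite groupM ?groupV.
have -> : ga_conj y e = ga_conj x (ga_conj z e) by rewrite ga_conjM /z mulKVg.
rewrite -ga_conj_mul.
suff -> : ga_mul e (ga_conj z e) = 0 by apply/ffunP => g; rewrite !ffunE.
have nez : e != ga_conj z e.
  apply: contra neq => /eqP ez; apply/eqP.
  by rewrite {1}ez ga_conjM /z mulKVg.
rewrite {1}/e eQ_ce // ga_mul_suml.
have [nz | nz] := boolP (z \in ('N(kerl))%g); last first.
  rewrite big1_seq // => phi /andP[_ galp].
  rewrite /e eQ_ce // ga_conj_sum ga_mul_sumr big1_seq // => phi' /andP[_ galp'].
  exact: ce_orth_out.
have nLz : z \in ('N(L))%g.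
  by rewrite (subsetP (normal_norm nLN)) // inE Gz nz.
have ez : ga_conj z e = \sum_(phi' <- gal_conjs theta) ce (phi' ^ z^-1)%CF.
  rewrite /e eQ_ce // ga_conj_sum; apply: eq_bigr => phi' _.
  by rewrite ga_conj_ce.
have [hit | nohit] := boolP (has (fun phi => has (fun phi' =>
        phi == (phi' ^ z^-1)%CF) (gal_conjs theta)) (gal_conjs theta)).
  exfalso; move/negP: nez; apply; apply/eqP.
  rewrite ez /e eQ_ce // -(big_map (fun phi => (phi ^ z^-1)%CF) predT (@ce _ L)).
  apply: perm_big; apply: uniq_perm; first exact: gal_uniq.
    rewrite map_inj_uniq ?gal_uniq //; exact: can_inj (cfConjgK z^-1).
  have [/hasP [phi0 galp0 /hasP [phi0' galp0' /eqP e0]]] := hit.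
  have [u0 def0'] := (mem_gal phi0' irrt).1 galp0'.
  have tw : (theta ^ z^-1)%CF \in gal_conjs theta.
    have -> : (theta ^ z^-1)%CF = cfAut (algC_invaut u0) phi0.
      rewrite e0 def0'; apply/cfunP => w.
      by rewrite cfunE !cfConjgE ?groupV // cfunE /= algC_autK.
    exact: gal_aut.
  have sub : {subset map (fun phi => (phi ^ z^-1)%CF) (gal_conjs theta)
                <= gal_conjs theta}.
    move=> rho /mapP [phi' galp' ->].
    have [u defp'] := (mem_gal phi' irrt).1 galp'.
    have -> : (phi' ^ z^-1)%CF = cfAut u (theta ^ z^-1)%CF.
      by rewrite defp'; apply/cfunP => w; rewrite cfunE !cfConjgE ?groupV // cfunE.
    exact: gal_aut irrt tw.
  have um : uniq (map (fun phi => (phi ^ z^-1)%CF) (gal_conjs theta)).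
    by rewrite (map_inj_uniq (can_inj (cfConjgK z^-1))) gal_uniq.
  have [_ eqm] := uniq_min_size um sub (eq_leq (esym (size_map _ _))).
  by move=> rho; rewrite eqm.
rewrite big1_seq // => phi /andP[_ galp].
rewrite ez ga_mul_sumr big1_seq // => phi' /andP[_ galp'].
rewrite ce_mul_irr ?cfConjg_irr ?(gal_irr galp) ?(gal_irr galp') //.
case: eqP => // eqp; exfalso; move/negP: nohit; apply.
by apply/hasP; exists phi => //; apply/hasP; exists phi' => //; apply/eqP.
Qed.


Lemma part2a : 'Ind[G] psi \in irr G -> eQ ('Ind[G] psi) = conj_sum G (eQ theta).
Proof.
move=> irrc.
have defc : 'Ind[G] theta = 'Ind[G] psi := cfIndInd psi sLG sHL.
have Ct : theta \is a character := cfInd_char L (lin_charW lin_psi).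
have irrt : theta \in irr L by apply: (Ind_irr_sub sLG Ct); rewrite defc.
set chi := 'Ind[G] psi in irrc defc *.
set S := conj_sum G (eQ theta).
have Sidem : ga_mul S S = S.
  rewrite {1}/S /conj_sum ga_mul_suml; apply: eq_big_seq => b bin.
  rewrite ga_mul_sumr.
  have [x Gx eb] := mem_conj_list bin.
  rewrite (eq_big_seq (fun b' => if b == b' then b else 0)).
    by rewrite sum_if_uniq ?undup_uniq.
  move=> b' /mem_conj_list [y Gy ->]; rewrite eb.
  case: eqP => [<- | ne]; first by rewrite -ga_conj_mul eQ_idem.
  by apply: part1 => //; apply/eqP.
have supS : forall g, g \notin G -> S g = 0.
  move=> g nGg; rewrite sum_ffunE big1_seq // => b /andP [_ /mem_conj_list [x Gx ->]].
  rewrite !ffunE; case: ifP => // Lgx; exfalso; move/negP: nGg; apply.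
  by rewrite -(groupJr _ Gx) (subsetP sLG).
have C2a := fiber_sum G (eQ theta).
have C2b : \sum_(x in G) ga_conj x (eQ theta) =
    \sum_(phi <- gal_conjs theta) ga_scale #|L|%:R (ce ('Ind[G] phi)).
  under eq_bigr do rewrite eQ_ce // ga_conj_sum.
  rewrite exchange_big /=; apply: eq_bigr => phi _; exact: ind_avg.
have galInd : forall phi, phi \in gal_conjs theta -> 'Ind[G] phi \in gal_conjs chi.
  move=> phi /(mem_gal _ irrt) [u ->]; rewrite -cfAutInd defc.
  by apply/mem_gal => //; exists u.
have cnz := ga_cen_neq0 G (eQ theta).
set c := #|ga_cen G (eQ theta)|%:R in C2a cnz.
have commS : forall chi', chi' \in irr G -> ga_mul S (ce chi') = ga_mul (ce chi') S.
  move=> chi' _; apply/esym/(ga_mul_comm (M := G)) => //.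
  by move=> x g Gx; apply: ce_class.
have stepA : ga_mul (eQ chi) S = S.
  apply: (ga_scale_inj cnz); rewrite -ga_mulZr -C2a C2b ga_mul_sumr.
  apply: eq_big_seq => phi galp; rewrite ga_mulZr.
  have irrI := gal_irr (galInd _ galp).
  rewrite (ga_mul_comm (M := G)) ?ce_eQ ?galInd //.
    by move=> x g Gx; apply: eQ_class.
  by move=> g nGg; rewrite ce_out.
have stepB : forall chi', chi' \in gal_conjs chi -> ga_mul (ce chi') S = ce chi'.
  move=> chi' galc; have irrc' := gal_irr galc.
  set n := count (fun phi => chi' == 'Ind[G] phi) (gal_conjs theta).
  have E1 : ga_scale c (ga_mul (ce chi') S) = ga_scale (#|L|%:R * n%:R) (ce chi').
    rewrite -ga_mulZr -C2a C2b ga_mul_sumr.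
    rewrite (eq_big_seq (fun phi => ga_scale #|L|%:R
               (if chi' == 'Ind[G] phi then ce chi' else 0))); last first.
      move=> phi galp; rewrite ga_mulZr ce_mul_irr //.
      exact: gal_irr (galInd _ galp).
    rewrite -ga_scale_sum -big_mkcond big_const_seq iter_addr_0.
    by rewrite ga_scale_nat ga_scaleA.
  set r := #|L|%:R * n%:R / c.
  have E2 : ga_mul (ce chi') S = ga_scale r (ce chi').
    by rewrite -(ga_scaleK cnz (ga_mul _ _)) E1 ga_scaleA /r mulrC.
  have npos : (0 < n)%N.
    rewrite -has_count; have [u defc'] := (mem_gal _ irrc).1 galc.
    apply/hasP; exists (cfAut u theta); first by apply: gal_aut (gal_self irrt).
    by rewrite defc' -cfAutInd defc.
  have rnz : r != 0.
    rewrite /r !mulf_neq0 ?invr_eq0 ?neq0CG //.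
    by rewrite pnatr_eq0 -lt0n.
  have T2 : ga_mul (ga_mul (ce chi') S) (ga_mul (ce chi') S) = ga_mul (ce chi') S.
    rewrite ga_mulA -(ga_mulA S) commS // (ga_mulA (ce chi') S S) Sidem.
    by rewrite -ga_mulA ce_mul_irr // eqxx.
  rewrite E2 ga_mulZl ga_mulZr ga_scaleA ce_mul_irr // eqxx in T2.
  have := congr1 (fun f : galg gT => f 1%g) T2; rewrite /= !gaZE => /eqP.
  have nz1 : ce chi' 1%g != 0.
    rewrite ffunE invg1 !mulf_neq0 ?invr_eq0 ?neq0CG //.
      by have [i ->] := irrP irrc'; apply: irr1_neq0.
    by have [i ->] := irrP irrc'; apply: irr1_neq0.
  rewrite -subr_eq0 -mulrBl mulf_eq0 (negPf nz1) orbF subr_eq0.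
  move/eqP => rr; have r1 : r = 1 by apply: (mulfI rnz); rewrite rr mulr1.
  by rewrite E2 r1; apply/ffunP => g; rewrite ffunE mul1r.
have stepC : ga_mul (eQ chi) S = eQ chi.
  rewrite [in LHS]eQ_ce // ga_mul_suml [RHS]eQ_ce //.
  by apply: eq_big_seq => chi' galc; apply: stepB.
by rewrite -stepC stepA.
Qed.


Lemma part2b : 'Ind[G] psi \in irr G -> forall alphaG alphaL : rat,
  ga_scale (ratr alphaG) (eMHK G H K) = eQ ('Ind[G] psi) ->
  ga_scale (ratr alphaL) (eMHK L H K) = eQ theta ->
  ratr alphaG = ratr alphaL *
    ((#|ga_cen G (eps H K)|%:R / #|ga_cen L (eps H K)|%:R)
     / (#|ga_cen G (eMHK L H K)|%:R / #|L|%:R)) :> algC.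
Proof.
move=> irrc aG aL hG hL.
have defc : 'Ind[G] theta = 'Ind[G] psi := cfIndInd psi sLG sHL.
have Ct : theta \is a character := cfInd_char L (lin_charW lin_psi).
have irrt : theta \in irr L by apply: (Ind_irr_sub sLG Ct); rewrite defc.
have e2 := part2a irrc.
rewrite /eMHK in hG hL *.
set eps0 := eps H K in hG hL *.
set eL := conj_sum L eps0 in hL *.
set xG := ratr aG in hG *; set xL := ratr aL in hL *.
have nzc := eQ1_neq0 irrc; have nzt := eQ1_neq0 irrt.
have h1 := congr1 (fun f : galg gT => f 1%g) hG; rewrite /= gaZE conj_sum1 in h1.
have h2 := congr1 (fun f : galg gT => f 1%g) hL; rewrite /= gaZE conj_sum1 in h2.
have xLnz : xL != 0 by apply: contra nzt => /eqP x0; rewrite -h2 x0 mul0r.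
have cenE : ga_cen G (eQ theta) = ga_cen G eL by rewrite -hL ga_cen_scale.
have h3 : eQ ('Ind[G] psi) 1%g = #|G|%:R / #|ga_cen G eL|%:R * eQ theta 1%g.
  by rewrite e2 conj_sum1 cenE.
rewrite -h1 -h2 in h3.
have e1nz : eps0 1%g != 0.
  by apply: contra nzc => /eqP e0; rewrite -h1 e0 !mulr0.
have nzG : #|G|%:R != 0 :> algC by rewrite neq0CG.
have nzL : #|L|%:R != 0 :> algC by rewrite neq0CG.
have n1 := ga_cen_neq0 G eps0; have n2 := ga_cen_neq0 L eps0.
have n3 := ga_cen_neq0 G eL.
have Xnz : #|G|%:R / #|ga_cen G eps0|%:R * eps0 1%g != 0.
  by rewrite !mulf_neq0 ?invr_eq0.
apply: (mulIf Xnz); rewrite /= h3.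
by field; rewrite n1 n2 n3 nzL.
Qed.

End Main.

Theorem proposition2 (gT : finGroupType) (G H K A L : {group gT})
  (psi : 'CF(H))
  (sHG : H \subset G) (nKH : (K <| H)%g) (cycHK : cyclic (H / K)%g)
  (lin_psi : psi \is a linear_char) (ker_psi : cfker psi = K)
  (nAG : (A <| G)%g) (sAH : A \subset H) (sHL : H \subset L) (sLG : L \subset G)
  (inv_psiA : forall x a, x \in L -> a \in A ->
                'Res[A] psi (a ^ x)%g = 'Res[A] psi a)
  (nLN : (L <| 'N_G(cfker ('Res[A] psi)))%g) :
  ('Ind[L] psi \in irr L ->
     forall x y, x \in G -> y \in G ->
       ga_conj x (eQ ('Ind[L] psi)) != ga_conj y (eQ ('Ind[L] psi)) ->
       ga_mul (ga_conj x (eQ ('Ind[L] psi))) (ga_conj y (eQ ('Ind[L] psi)))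
         = 0)
  /\
  ('Ind[G] psi \in irr G ->
     eQ ('Ind[G] psi) = conj_sum G (eQ ('Ind[L] psi))
     /\
     forall alphaG alphaL : rat,
       ga_scale (ratr alphaG) (eMHK G H K) = eQ ('Ind[G] psi) ->
       ga_scale (ratr alphaL) (eMHK L H K) = eQ ('Ind[L] psi) ->
       ratr alphaG = ratr alphaL *
         ((#|ga_cen G (eps H K)|%:R / #|ga_cen L (eps H K)|%:R)
          / (#|ga_cen G (eMHK L H K)|%:R / #|L|%:R)) :> algC).
Proof.
split.
  exact: (part1 lin_psi nAG sAH sHL sLG inv_psiA nLN).
move=> irrc; split.
  exact: (part2a lin_psi nAG sAH sHL sLG inv_psiA nLN irrc).
move=> aG aL; exact: (part2b lin_psi nAG sAH sHL sLG inv_psiA nLN irrc).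
Qed.
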